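(* Let $\mathbf{B}\in\dot{\mathbb{P}}(\mathbb{L}(\mathbf{C}))$ with $|\mathbf{B}|=|\mathbf{C}|$. Then $\mathbf{B}$ is a minimal sufficient cause for $D$ relative to $\mathbf{C}$ for some individual $\omega^*\in\Omega$ if and only if $\mathbf{B}$ is irreducible for $\mathcal{D}(\mathbf{C},\Omega)$.
   Context: An event is a binary random variable on a population $\Omega$; $\overline{X}=1-X$; $\mathbb{L}(\mathbf{C})=\mathbf{C}\cup\{\overline{X}:X\in\mathbf{C}\}$; $\dot{\mathbb{P}}(\mathbb{L}(\mathbf{C}))$ is the set of subsets of $\mathbb{L}(\mathbf{C})$ not containing both $X$ and $\overline{X}$ for any $X$; $(L)_{\mathbf{c}}$ is the value of literal $L$ under assignment $\mathbf{c}$ to $\mathbf{C}$; $\bigwedge(\mathbf{B})=\min_{L\in\mathbf{B}}L$. Potential outcomes $\mathcal{D}(\mathbf{C},\Omega)$: values $D_{\mathbf{c}}(\omega)\in\{0,1\}$ for all $\omega\in\Omega$ and assignments $\mathbf{c}$. A set $\mathbf{B}\subseteq\mathbb{L}(\mathbf{C})$ is a sufficient cause for $D$ relative to $\mathbf{C}$ in a nonempty $\Omega^*\subseteq\Omega$ if there exists $\mathbf{c}^*$ with $(\bigwedge(\mathbf{B}))_{\mathbf{c}^*}=1$ and for all $\mathbf{c}$ with $(\bigwedge(\mathbf{B}))_{\mathbf{c}}=1$ one has $D_{\mathbf{c}}(\omega)=1$ for all $\omega\in\Omega^*$; it is a minimal sufficient cause if in addition no proper subset of $\mathbf{B}$ is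 a sufficient cause for $D$ in $\Omega^*$. ''For $\omega^*$'' means $\Omega^*=\{\omega^*\}$. A sufficient cause representation $(\mathbf{A},\mathfrak{B})$ for $\mathcal{D}(\mathbf{C},\Omega)$ is a tuple $\mathbf{A}=\langle A_1,\dots,A_p\rangle$ of binary random variables on $\Omega$ unaffected by interventions on $\mathbf{C}$ and a tuple $\mathfrak{B}=\langle\mathbf{B}_1,\dots,\mathbf{B}_p\rangle$, $\mathbf{B}_i\in\dot{\mathbb{P}}(\mathbb{L}(\mathbf{C}))$, such that for all $\omega,\mathbf{c}$: $D_{\mathbf{c}}(\omega)=1$ iff some $j$ has $A_j(\omega)=1$ and $(\bigwedge(\mathbf{B}_j))_{\mathbf{c}}=1$. $\mathbf{B}\in\dot{\mathbb{P}}(\mathbb{L}(\mathbf{C}))$ is irreducible for $\mathcal{D}(\mathbf{C},\Omega)$ if in every such representation some $\mathbf{B}_i\in\mathfrak{B}$ satisfies $\mathbf{B}\subseteq\mathbf{B}_i$. *)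

(* Defs.v *)
From mathcomp Require Import all_boot.
Set Implicit Arguments. Unset Strict Implicit. Unset Printing Implicit Defensive.

(* The variables C are indexed by a finite type V.
   A literal is a pair (X, b): (X, true) stands for X, (X, false) for its
   complement 1 - X.  L(C) = V * bool. *)
Definition literal (V : finType) := (V * bool)%type.

Definition assignment (V : finType) := {ffun V -> bool}.

Definition lit_val (V : finType) (L : literal V) (c : assignment V) : bool :=
  if L.2 then c L.1 else ~~ c L.1.

(* B belongs to P-dot(L(C)): no variable occurs with both polarities. *)
Definition consistent (V : finType) (B : {set literal V}) : Prop :=
  forall X : V, ~ ((X, true) \in B /\ (X, false) \in B).

Definition conj_val (V : finType) (B : {set literal V}) (c : assignment V) : bool :=
  [forall L in B, lit_val L c].

Definition outcomes (V : finType) (Omega : Type) := assignment V -> Omega -> bool.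

Definition sufficient_cause (V : finType) (Omega : Type) (D : outcomes V Omega)
    (OmegaS : Omega -> Prop) (B : {set literal V}) : Prop :=
  (exists cs : assignment V, conj_val B cs) /\
  (forall c : assignment V, conj_val B c -> forall w, OmegaS w -> D c w).

Definition minimal_sufficient_cause (V : finType) (Omega : Type)
    (D : outcomes V Omega) (OmegaS : Omega -> Prop) (B : {set literal V}) : Prop :=
  sufficient_cause D OmegaS B /\
  (forall B' : {set literal V}, B' \proper B -> ~ sufficient_cause D OmegaS B').

Definition sc_representation (V : finType) (Omega : Type) (D : outcomes V Omega)
    (p : nat) (A : 'I_p -> Omega -> bool) (Bs : 'I_p -> {set literal V}) : Prop :=
  (forall i, consistent (Bs i)) /\
  (forall (w : Omega) (c : assignment V),
      D c w = [exists j : 'I_p, A j w && conj_val (Bs j) c]).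

Definition irreducible (V : finType) (Omega : Type) (D : outcomes V Omega)
    (B : {set literal V}) : Prop :=
  forall (p : nat) (A : 'I_p -> Omega -> bool) (Bs : 'I_p -> {set literal V}),
    sc_representation D A Bs -> exists i : 'I_p, B \subset Bs i.

(* Main.v *)
From Stdlib Require Import Classical ClassicalEpsilon.
Require Import Defs.
From mathcomp Require Import all_boot.

Definition pb (P : Prop) : bool := if excluded_middle_informative P then true else false.
Lemma pbP (P : Prop) : reflect P (pb P).
Proof. by rewrite /pb; case: (excluded_middle_informative P) => H; constructor. Qed.

Section Aux.
Variables (V : finType) (Omega : Type) (D : outcomes V Omega).

Definition suffb (S : {set literal V}) (w : Omega) : bool :=
  [exists cs, conj_val S cs] && [forall c, conj_val S c ==> D c w].

Definition minb (S : {set literal V}) (w : Omega) : bool :=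
  suffb S w && [forall S' : {set literal V}, (S' \proper S) ==> ~~ suffb S' w].

Lemma suffbP S w : reflect (sufficient_cause D (fun x => x = w) S) (suffb S w).
Proof.
apply: (iffP andP) => [[/existsP [cs Hcs] /forallP H]|[[cs Hcs] H]].
  split; first by exists cs.
  by move=> c Hc x ->; exact: (implyP (H c) Hc).
split; first by apply/existsP; exists cs.
by apply/forallP => c; apply/implyP => Hc; apply: H.
Qed.

Lemma conjP (S : {set literal V}) (c : assignment V) : reflect (forall L, L \in S -> lit_val L c) (conj_val S c).
Proof.
apply: (iffP forallP) => [H L HL|H L]; first exact: (implyP (H L) HL).
by apply/implyP; apply: H.
Qed.

Lemma sat_consistent (S : {set literal V}) cs : conj_val S cs -> consistent S.
Proof.
move/conjP=> H X [H1 H2]; have := H _ H1; have := H _ H2; rewrite /lit_val /=.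
by move=> /negP.
Qed.

Variable B : {set literal V}.
Hypothesis HB : consistent B.
Hypothesis Hcard : #|B| = #|V|.

Lemma full X : ((X, true) \in B) || ((X, false) \in B).
Proof.
have Hinj : {in B &, injective (fun L : literal V => L.1)}.
  move=> [x b] [y b'] H1 H2 /= Exy; subst y.
  case: b b' H1 H2 => [] [] // H1 H2; case: (HB x); split => //.
have : [set L.1 | L in B] = setT.
  apply/eqP; rewrite eqEcard subsetT /= cardsT (card_in_imset Hinj) Hcard //.
move/setP/(_ X); rewrite in_setT => /imsetP [[y b] Hy /= E]; subst y.
by case: b Hy => ->; rewrite ?orbT.
Qed.

Definition cB : assignment V := [ffun X => (X, true) \in B].

Lemma lit_cB L : lit_val L cB = (L \in B).
Proof.
case: L => X b; rewrite /lit_val /= ffunE; case: b => //=.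
have := full X; case E1: ((X,true) \in B) => /=; last by move=> ->.
case E: ((X,false) \in B) => // _; case: (HB X); split => //.
Qed.

Lemma conj_cB (S : {set literal V}) : conj_val S cB = (S \subset B).
Proof.
apply/conjP/subsetP => H L HL; [by rewrite -lit_cB; apply: H | by rewrite lit_cB; apply: H].
Qed.

Lemma consistent_sup (S : {set literal V}) : consistent S -> B \subset S -> S = B.
Proof.
move=> HS HBS; apply/eqP; rewrite eqEsubset HBS andbT; apply/subsetP => [[X b]] HX.
have := full X; case/orP => H.
  case: b HX => // HX; case: (HS X); split => //; exact: (subsetP HBS).
case: b HX => // HX; case: (HS X); split => //; exact: (subsetP HBS).
Qed.

End Aux.

Theorem mainTheorem3 (V : finType) (Omega : Type) (D : outcomes V Omega)
    (B : {set literal V}) (HB : consistent B) (Hcard : #|B| = #|V|) :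
  (exists ws : Omega, minimal_sufficient_cause D (fun w => w = ws) B) <->
  irreducible D B.
Proof.
split.
  move=> [ws [[[cs Hcs] Hsuf] Hmin]] p A Bs [Hcons HD].
  have HDB : D (@cB _ B) ws by apply: Hsuf => //; rewrite conj_cB.
  move: HDB; rewrite HD => /existsP [j /andP [HA Hj]].
  exists j; rewrite conj_cB // in Hj.
  case E: (Bs j \proper B).
    exfalso; apply: (Hmin _ E); split; first by exists (@cB _ B); rewrite conj_cB.
    by move=> c Hc w ->; rewrite HD; apply/existsP; exists j; rewrite HA.
  by move: E; rewrite properEneq Hj andbT => /negbFE/eqP ->.
move=> Hirr.
case: (classic (exists ws : Omega, minimal_sufficient_cause D (fun w => w = ws) B)) => // Hno.
exfalso.
pose p := #|{set literal V}|.
pose Bs := fun i : 'I_p =>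
  if pb (exists w, @minb _ _ D (enum_val i) w)
  then enum_val i else set0.
pose A := fun (i : 'I_p) w => @minb _ _ D (enum_val i) w.
have Hrep : sc_representation D A Bs.
  split.
    move=> i; rewrite /Bs; case: pbP => [[w Hw]|_].
      by move: Hw => /andP [/andP [/existsP [cs Hcs] _] _]; apply: sat_consistent Hcs.
    by move=> X; rewrite !inE; case.
  move=> w c; apply/idP/existsP.
    move=> Hc.
    pose Fc := [set L : literal V | lit_val L c].
    have HFc : @suffb _ _ D Fc w && (Fc \subset Fc).
      rewrite subxx andbT; apply/andP; split.
        by apply/existsP; exists c; apply/conjP => L; rewrite inE.
      apply/forallP => c'; apply/implyP => /conjP Hc'.
      suff -> : c' = c by [].
      apply/ffunP => X; have := Hc' (X, c X); rewrite inE /lit_val /=.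
      by case: (c X) => /(_ isT) //; move/negbTE.
    case: (@arg_minnP _ Fc (fun S : {set literal V} => @suffb _ _ D S w && (S \subset Fc)) (fun S : {set literal V} => #|S|) HFc) => S /andP [HS HSF] HSmin.
    exists (enum_rank S).
    have HmS : @minb _ _ D S w.
      rewrite /minb HS /=; apply/forallP => S'; apply/implyP => HS'.
      apply/negP => HsS'.
      have := HSmin S'; rewrite HsS' (subset_trans (proper_sub HS') HSF) => /(_ isT).
      by rewrite leqNgt (proper_card HS').
    rewrite /A /Bs enum_rankK HmS /=.
    case: pbP => [_|[]]; last by exists w.
    by apply/conjP => L HL; have := subsetP HSF L HL; rewrite inE.
  move=> [j /andP [HA Hj]].
  move: Hj; rewrite /Bs; case: pbP => [_|[]]; last by exists w.
  by move: HA => /andP [/andP [_ /forallP H] _] Hj; exact: (implyP (H c) Hj).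
have [i Hi] := Hirr _ _ _ Hrep.
move: Hi; rewrite /Bs; case: pbP => [[w Hw] Hi|Hne Hi].
  apply: Hno; exists w.
  have HcS := Hw; move: HcS => /andP [/andP [/existsP [cs Hcs] _] _].
  have E := @consistent_sup _ B HB Hcard _ (@sat_consistent _ _ _ Hcs) Hi.
  move: Hw; rewrite E => /andP [/suffbP Hs /forallP Hm]; split => // B' HB' /suffbP Hs'.
  by have := implyP (Hm B') HB'; rewrite Hs'.
have HB0 : B = set0 by apply/eqP; rewrite -subset0.
have HV : #|V| = 0 by rewrite -Hcard HB0 cards0.
have Hall : forall c c' : assignment V, c = c'.
  move=> c c'; apply/ffunP => X.
  by move: HV => /eqP; rewrite -cardsT cards_eq0 => /eqP HT; have := in_setT X; rewrite HT inE.
have Hrep0 : sc_representation D (fun (i : 'I_0) _ => false) (fun _ => set0).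
  split; first by move=> [].
  move=> w c; apply/idP/existsP => [Hc|[[]]] //.
  exfalso; apply: Hno; exists w; split.
    split; first by exists c; rewrite HB0; apply/conjP => L; rewrite inE.
    by move=> c' _ x ->; rewrite (Hall c' c).
  by move=> B'; rewrite HB0 => /proper_card; rewrite cards0.
by have [[]] := Hirr _ _ _ Hrep0.
Qed.
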